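(* Let $A\in(0,1)$, $M<0$, $Q>0$, $S>0$ and consider the planar system $$\frac{du}{d\tau}=u^2\big((u+A)(1-u)(u-M)-Qv\big),\qquad \frac{dv}{d\tau}=S(u+A)(u-v)v .$$ Put $T=1-A+M$, and let $P=(\tilde u,\tilde u)$ with $\tilde u>0$ be a positive equilibrium of the system. Define $$f(\tilde u)=\frac{\tilde u\big((1-\tilde u)(\tilde u-M)+(\tilde u+A)(1-2\tilde u+M)\big)}{A+\tilde u}.$$ Then $P$ is: (i) a saddle point if $\tilde u^2(2\tilde u-T)-AM<0$; (ii) a repeller if $\tilde u^2(2\tilde u-T)-AM>0$ and $S<f(\tilde u)$; (iii) an attractor if $\tilde u^2(2\tilde u-T)-AM>0$ and $S>f(\tilde u)$.
   Context: The positive equilibria of the system are exactly the points $(u,u)$ with $u>0$ and $(u+A)(1-u)(u-M)=Qu$. *)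

(* Defs.v *)
From Stdlib Require Import Reals.
From Coquelicot Require Import Coquelicot.
Open Scope R_scope.

Definition Fu (A M Q : R) (u v : R) : R :=
  u ^ 2 * ((u + A) * (1 - u) * (u - M) - Q * v).
Definition Fv (A S : R) (u v : R) : R :=
  S * (u + A) * (u - v) * v.

Definition J11 A M Q u0 v0 := Derive (fun x => Fu A M Q x v0) u0.
Definition J12 A M Q u0 v0 := Derive (fun y => Fu A M Q u0 y) v0.
Definition J21 A S u0 v0 := Derive (fun x => Fv A S x v0) u0.
Definition J22 A S u0 v0 := Derive (fun y => Fv A S u0 y) v0.

Definition eigen2 (a b c d : R) (l : C) : Prop :=
  Cminus (Cmult (Cminus (RtoC a) l) (Cminus (RtoC d) l)) (Cmult (RtoC b) (RtoC c))
  = RtoC 0.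

Definition saddle2 (a b c d : R) : Prop :=
  (exists l, eigen2 a b c d l /\ Im l = 0 /\ Re l < 0) /\
  (exists l, eigen2 a b c d l /\ Im l = 0 /\ Re l > 0).
Definition repeller2 (a b c d : R) : Prop :=
  forall l, eigen2 a b c d l -> Re l > 0.
Definition attractor2 (a b c d : R) : Prop :=
  forall l, eigen2 a b c d l -> Re l < 0.

Definition jac_saddle A M Q S u0 v0 :=
  saddle2 (J11 A M Q u0 v0) (J12 A M Q u0 v0) (J21 A S u0 v0) (J22 A S u0 v0).
Definition jac_repeller A M Q S u0 v0 :=
  repeller2 (J11 A M Q u0 v0) (J12 A M Q u0 v0) (J21 A S u0 v0) (J22 A S u0 v0).
Definition jac_attractor A M Q S u0 v0 :=
  attractor2 (J11 A M Q u0 v0) (J12 A M Q u0 v0) (J21 A S u0 v0) (J22 A S u0 v0).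

Definition fS (A M ut : R) : R :=
  ut * ((1 - ut) * (ut - M) + (ut + A) * (1 - 2 * ut + M)) / (A + ut).

(* Main.v *)
Require Import Defs.
From Stdlib Require Import Reals Lra Psatz.
From Coquelicot Require Import Coquelicot.
Open Scope R_scope.

Lemma eigen2_iff a b c d x y :
  eigen2 a b c d (x, y) <-> (a*d - (a+d)*x + x*x - y*y - b*c = 0 /\ y*(2*x-(a+d)) = 0).
Proof.
  unfold eigen2, Cminus, Cmult, Cplus, Copp, RtoC; simpl.
  split.
  - intros H. injection H. intros H1 H2. split; nra.
  - intros [H1 H2]. f_equal; nra.
Qed.

Lemma J11_eq A M Q w : J11 A M Q w w = 2*w*((w + A) * (1 - w) * (w - M) - Q * w) + w^2 * ((1-w)*(w-M) + (w+A)*(1-2*w+M)).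
Proof.
  unfold J11, Fu. apply is_derive_unique. auto_derive; auto. ring.
Qed.
Lemma J12_eq A M Q w : J12 A M Q w w = - Q * w^2.
Proof. unfold J12, Fu. apply is_derive_unique. auto_derive; auto. ring. Qed.
Lemma J21_eq A S w : J21 A S w w = S*(w+A)*w.
Proof. unfold J21, Fv. apply is_derive_unique. auto_derive; auto. ring. Qed.
Lemma J22_eq A S w : J22 A S w w = - S*(w+A)*w.
Proof. unfold J22, Fv. apply is_derive_unique. auto_derive; auto. ring. Qed.
Lemma saddle_gen a b c d : a*d - b*c < 0 -> saddle2 a b c d.
Proof.
  intros Hd. set (t := a+d). set (s := sqrt (t*t - 4*(a*d-b*c))).
  assert (Hs : s*s = t*t - 4*(a*d-b*c)) by (apply sqrt_sqrt; nra).
  assert (Hs0 : 0 <= s) by apply sqrt_pos.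
  assert (Hst : t < s /\ -t < s) by (split; nra).
  split.
  - exists ((t - s)/2, 0). rewrite eigen2_iff. simpl. repeat split; unfold t in *; nra.
  - exists ((t + s)/2, 0). rewrite eigen2_iff. simpl. repeat split; unfold t in *; nra.
Qed.
Lemma rep_gen a b c d : a*d - b*c > 0 -> a + d > 0 -> repeller2 a b c d.
Proof.
  intros Hd Ht [x y]. rewrite eigen2_iff. simpl. intros [H1 H2].
  destruct (Req_dec y 0) as [->|Hy].
  - nra.
  - assert (2*x - (a+d) = 0). { apply (Rmult_eq_reg_l y); auto. lra. } lra.
Qed.
Lemma att_gen a b c d : a*d - b*c > 0 -> a + d < 0 -> attractor2 a b c d.
Proof.
  intros Hd Ht [x y]. rewrite eigen2_iff. simpl. intros [H1 H2].
  destruct (Req_dec y 0) as [->|Hy].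
  - nra.
  - assert (2*x - (a+d) = 0). { apply (Rmult_eq_reg_l y); auto. lra. } lra.
Qed.

Theorem lemma3 (A M Q S ut : R) :
  0 < A < 1 -> M < 0 -> 0 < Q -> 0 < S ->
  0 < ut -> Fu A M Q ut ut = 0 -> Fv A S ut ut = 0 ->
  let T := 1 - A + M in
  (ut ^ 2 * (2 * ut - T) - A * M < 0 -> jac_saddle A M Q S ut ut) /\
  (ut ^ 2 * (2 * ut - T) - A * M > 0 -> S < fS A M ut -> jac_repeller A M Q S ut ut) /\
  (ut ^ 2 * (2 * ut - T) - A * M > 0 -> S > fS A M ut -> jac_attractor A M Q S ut ut).
Proof.
  intros [HA HA1] HM HQ HS Hw Hu _ T.
  unfold jac_saddle, jac_repeller, jac_attractor.
  rewrite J11_eq, J12_eq, J21_eq, J22_eq.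
  unfold Fu in Hu.
  assert (Hg : (ut + A) * (1 - ut) * (ut - M) - Q * ut = 0).
  { apply (Rmult_eq_reg_l (ut^2)). rewrite Rmult_0_r; exact Hu. apply pow_nonzero; lra. }
  rewrite Hg.
  set (g1 := (1-ut)*(ut-M) + (ut+A)*(1-2*ut+M)).
  assert (HQw : Q * ut = (ut + A) * (1 - ut) * (ut - M)) by lra.
  assert (Hdet : (2 * ut * 0 + ut ^ 2 * g1) * (- S * (ut + A) * ut) - (- Q * ut ^ 2) * (S * (ut + A) * ut)
     = S*(ut+A)*ut^2 * (ut ^ 2 * (2 * ut - T) - A * M)).
  { unfold g1, T. replace (- Q * ut ^ 2) with (- (Q*ut)*ut) by ring. rewrite HQw. ring. }
  assert (Htr : (2 * ut * 0 + ut ^ 2 * g1) + (- S * (ut + A) * ut) = ut*(A+ut)*(fS A M ut - S)).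
  { unfold fS, g1. field. lra. }
  assert (Hp : 0 < S*(ut+A)*ut^2). { apply Rmult_lt_0_compat. nra. nra. }
  assert (Hp2 : 0 < ut*(A+ut)) by nra.
  split; [|split]; intros HD.
  - apply saddle_gen. rewrite Hdet. nra.
  - intros HS'. apply rep_gen. rewrite Hdet. nra. rewrite Htr. nra.
  - intros HS'. apply att_gen. rewrite Hdet. nra. rewrite Htr. nra.
Qed.
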